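(* For every $\varepsilon>0$ and positive integer $m$ there is $p_0(\varepsilon,m)$ such that for every prime $p\ge p_0(\varepsilon,m)$ there exists a Euclidean sub-$p$-toral set $B=\{b_1,\dots,b_m\}$ (in some Euclidean space) with $\bigl|\,|b_i-b_j|-|i-j|\,\bigr|<\varepsilon$ for all $i,j$.
   Context: A $p$-torus is a group isomorphic to $(\mathbb{Z}_p)^\alpha$ for some $\alpha\ge1$. A set $X\subset\mathbb{R}^k$ is Euclidean sub-$p$-toral if there exist $n\ge k$, a $p$-torus $G$ and an action of $G$ on $\mathbb{R}^n$ by isometries such that $X$ (viewed in $\mathbb{R}^n$ via the standard inclusion $\mathbb{R}^k\subset\mathbb{R}^n$) is contained in a single $G$-orbit. *)

(* Defs.v *)
From HB Require Import structures.
From mathcomp Require Import all_boot all_order all_algebra.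
From mathcomp Require Import reals.
Set Implicit Arguments. Unset Strict Implicit. Unset Printing Implicit Defensive.
Import Order.TTheory GRing.Theory Num.Theory.
Local Open Scope ring_scope.

Definition edist (R : realType) (n : nat) (x y : 'rV[R]_n) : R :=
  Num.sqrt (\sum_(i < n) (x 0 i - y 0 i) ^+ 2).

(* act is an action of the p-torus G = ('Z_p)^alpha = 'rV['Z_p]_alpha on R^n
   by isometries (of the Euclidean distance). *)
Definition isometric_torus_action (R : realType) (p alpha n : nat)
    (act : 'rV['Z_p]_alpha -> 'rV[R]_n -> 'rV[R]_n) : Prop :=
  [/\ forall x, act 0 x = x,
      forall g h x, act (g + h) x = act g (act h x)
    & forall g x y, edist (act g x) (act g y) = edist x y].

Definition std_incl (R : realType) (k d : nat) (x : 'rV[R]_k) : 'rV[R]_(k + d) :=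
  row_mx x 0.

Definition euclidean_sub_p_toral (R : realType) (p k : nat) (X : 'rV[R]_k -> Prop) : Prop :=
  exists (d alpha : nat) (act : 'rV['Z_p]_alpha -> 'rV[R]_(k + d) -> 'rV[R]_(k + d))
         (x0 : 'rV[R]_(k + d)),
    [/\ (1 <= alpha)%N, isometric_torus_action act
      & forall x, X x -> exists g, std_incl d x = act g x0].

(* Main.v *)
From Pilot Require Import Defs.
From HB Require Import structures.
From mathcomp Require Import all_boot all_order all_algebra.
From mathcomp Require Import reals.
From mathcomp Require Import boolp classical_sets functions topology normedtype derive trigo.
From mathcomp Require Import ring lra.
Import Pilot.Defs.
Import Order.TTheory GRing.Theory Num.Theory.
Import numFieldNormedType.Exports.
Local Open Scope ring_scope.

Lemma sin_approx {R : realType} (d : R) : 0 < d ->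
  exists2 e : R, 0 < e & forall h, `|h| < e -> `|sin h - h| <= d * `|h|.
Proof.
move=> d0.
have hd := @derivable_sin R 0.
have hv : 'D_1 (@sin R) 0 = 1 by rewrite derive_val cos0.
move: hd; rewrite /derivable -[lim _]/('D_1 (@sin R) 0) hv.
move/cvgrPdist_lt => /(_ d d0).
rewrite near_withinE.
case/nbhs_ballP => e /= e0 He.
exists e => // h hh.
have [->|h0] := eqVneq h 0; first by rewrite sin0 subr0 normr0 mulr0.
have := He h; rewrite /ball /= sub0r normrN => /(_ hh h0).
have -> : h%:A = h by rewrite /GRing.scale /= mulr1.
rewrite addr0 sin0 subr0 => H.
have -> : sin h - h = - (h * (1 - h^-1 * sin h)).
  by rewrite mulrBr mulr1 mulrA mulfV // mul1r opprB.
rewrite normrN normrM mulrC ler_pM2r ?normr_gt0 //.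
exact: ltW.
Qed.

Definition mk2 {R : realType} (a b : R) : 'rV[R]_2 :=
  \row_(j < 2) if val j == 0%N then a else b.

Definition rotv {R : realType} (t : R) (v : 'rV[R]_2) : 'rV[R]_2 :=
  mk2 (cos t * v 0 ord0 - sin t * v 0 ord_max) (sin t * v 0 ord0 + cos t * v 0 ord_max).

Lemma mk2_0 {R : realType} (a b : R) : (mk2 a b) 0 ord0 = a.
Proof. by rewrite mxE. Qed.
Lemma mk2_1 {R : realType} (a b : R) : (mk2 a b) 0 ord_max = b.
Proof. by rewrite mxE. Qed.

Lemma mk2_eta {R : realType} (v : 'rV[R]_2) : v = mk2 (v 0 ord0) (v 0 ord_max).
Proof.
apply/rowP => j; rewrite mxE.
case: j => [[|[|j]] Hj] //=.
- by congr (v _ _); apply: val_inj.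
- by congr (v _ _); apply: val_inj.
Qed.

Lemma rotvD (R : realType) (a b : R) v : rotv a (rotv b v) = rotv (a + b) v.
Proof.
rewrite /rotv !mk2_0 !mk2_1 cosD sinD; congr mk2; ring.
Qed.

Lemma rotv0 {R : realType} (v : 'rV[R]_2) : rotv 0 v = v.
Proof.
by rewrite /rotv cos0 sin0 !mul1r !mul0r subr0 add0r -mk2_eta.
Qed.

Lemma rotvP (R : realType) (t : R) q v : rotv (t + (pi *+ 2) *+ q) v = rotv t v.
Proof. by rewrite /rotv (periodicn (@cosD2pi R)) (periodicn (@sinD2pi R)). Qed.

Lemma edist2 {R : realType} (v w : 'rV[R]_2) :
  edist v w = Num.sqrt ((v 0 ord0 - w 0 ord0) ^+ 2 + (v 0 ord_max - w 0 ord_max) ^+ 2).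
Proof.
rewrite /edist !big_ord_recl big_ord0 addr0.
have -> : lift ord0 (ord0 : 'I_1) = ord_max :> 'I_2 by apply: val_inj.
by [].
Qed.

Lemma rotv_iso {R : realType} (t : R) v w : edist (rotv t v) (rotv t w) = edist v w.
Proof.
rewrite !edist2 /rotv !mk2_0 !mk2_1; congr Num.sqrt.
set c := cos t; set s := sin t.
have -> : (c * v 0 ord0 - s * v 0 ord_max - (c * w 0 ord0 - s * w 0 ord_max)) ^+ 2 +
  (s * v 0 ord0 + c * v 0 ord_max - (s * w 0 ord0 + c * w 0 ord_max)) ^+ 2 =
  (c ^+ 2 + s ^+ 2) * ((v 0 ord0 - w 0 ord0) ^+ 2 + (v 0 ord_max - w 0 ord_max) ^+ 2)
  by ring.
by rewrite cos2Dsin2 mul1r.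
Qed.

Lemma rotv_dist {R : realType} (r z y : R) :
  edist (rotv (z + y) (mk2 r 0)) (rotv (z - y) (mk2 r 0)) = `|2 * r * sin y|.
Proof.
rewrite edist2 /rotv !mk2_0 !mk2_1 cosD cosB sinD sinB.
apply: (eq_trans _ (sqrtr_sqr _)); congr Num.sqrt.
transitivity ((2 * r * sin y) ^+ 2 * (cos z ^+ 2 + sin z ^+ 2)); first ring.
by rewrite cos2Dsin2 mulr1.
Qed.

Lemma row_mx_0 {R : realType} (v : 'rV[R]_2) : row_mx v (0 : 'rV[R]_0) = v.
Proof.
apply/rowP => j; rewrite mxE; case: splitP => [j' hj|k]; last by case: k.
by congr (v _ _); apply: val_inj.
Qed.

Theorem lemma6 (R : realType) (eps : R) (m : nat) :
  0 < eps -> (0 < m)%N ->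
  exists p0 : nat, forall p : nat, prime p -> (p0 <= p)%N ->
    exists (k : nat) (b : 'I_m -> 'rV[R]_k),
      euclidean_sub_p_toral p (fun x => exists i, x = b i) /\
      forall i j : 'I_m,
        `| edist (b i) (b j) - `|(i%:R : R) - j%:R| | < eps.
Proof.
move=> e0 m0.
have mR : 0 < (m%:R : R) by rewrite ltr0n.
set dl := eps / m%:R.
have dl0 : 0 < dl by rewrite divr_gt0.
have [et et0 Het] := @sin_approx R dl dl0.
have bnd0 : 0 <= m%:R * pi / et by rewrite divr_ge0 // ?mulr_ge0 ?ltW // pi_gt0.
exists ((Num.bound (m%:R * pi / et)) + m)%N => p pp hp.
set n := (Zp_trunc p).+2.
have hn : n = p := Zp_cast (prime_gt1 pp).
have nR : 0 < (n%:R : R) by rewrite ltr0n.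
set x : R := pi / n%:R.
have x0 : 0 < x by rewrite divr_gt0 // pi_gt0.
have xn : x * n%:R = pi by rewrite /x mulfVK // gt_eqF.
have hbn : m%:R * pi / et < n%:R.
  apply: (lt_le_trans (archi_boundP bnd0)); rewrite ler_nat hn.
  by apply: leq_trans hp; apply: leq_addr.
have mn : (m <= n)%N by rewrite hn; apply: leq_trans hp; apply: leq_addl.
have xm : x * m%:R <= et.
  rewrite /x mulrAC ler_pdivrMr // mulrC.
  by move: hbn; rewrite ltr_pdivrMr // => /ltW; rewrite [et * _]mulrC.
set r : R := (2 * x)^-1.
set x0v := mk2 r 0.
pose b (i : 'I_m) := rotv (2 * x * (i : nat)%:R) x0v.
exists 2%N, b; split.
  exists 0%N, 1%N, (fun (g : 'rV['Z_p]_1) (v : 'rV[R]_(2 + 0)) =>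
     rotv (2 * x * (val (g 0 0) : nat)%:R) v), x0v; split => //.
  - split.
    + by move=> v; rewrite mxE /= mulr0 rotv0.
    + move=> g h v; rewrite rotvD mxE /=.
      set a := val (g 0 0); set c := val (h 0 0).
      have -> : 2 * x * a%:R + 2 * x * c%:R =
        2 * x * ((a + c) %% n)%N%:R + (pi *+ 2) *+ ((a + c) %/ n).
        rewrite -mulrDr -natrD {1}(divn_eq (a + c) n) natrD natrM mulrDr addrC.
        congr (_ + _); rewrite -mulr_natr -xn; ring.
      by rewrite rotvP.
    + by move=> g v w; rewrite rotv_iso.
  - move=> v [i ->]; exists (const_mx (inZp i)).
    rewrite /std_incl row_mx_0 /b mxE /=.
    by rewrite modn_small // (leq_trans (ltn_ord i) mn).
move=> i j. rewrite /b.
have -> : 2 * x * (i : nat)%:R = x * ((i : nat)%:R + (j : nat)%:R) + x * ((i : nat)%:R - (j : nat)%:R)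
  by ring.
have -> : 2 * x * (j : nat)%:R = x * ((i : nat)%:R + (j : nat)%:R) - x * ((i : nat)%:R - (j : nat)%:R)
  by ring.
rewrite rotv_dist.
set y := x * ((i : nat)%:R - (j : nat)%:R).
have hij : `|(i : nat)%:R - (j : nat)%:R : R| < m%:R.
  have hi : ((i : nat)%:R : R) < m%:R by rewrite ltr_nat.
  have hj : ((j : nat)%:R : R) < m%:R by rewrite ltr_nat.
  have hi0 : (0 : R) <= (i : nat)%:R by rewrite ler0n.
  have hj0 : (0 : R) <= (j : nat)%:R by rewrite ler0n.
  rewrite ltr_norml; apply/andP; split; lra.
have hy : `|y| < et.
  rewrite /y normrM gtr0_norm //; apply: lt_le_trans xm.
  by rewrite ltr_pM2l.
have Hs := Het y hy.
have -> : 2 * r * sin y = sin y / x by rewrite /r invfM mulrA mulfV ?pnatr_eq0 // mul1r mulrC.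
have hyx : `|y| / x = `|(i : nat)%:R - (j : nat)%:R : R|.
  by rewrite /y normrM gtr0_norm // [LHS]mulrC mulKf ?gt_eqF.
have Hx : `|x^-1| = x^-1 by rewrite gtr0_norm // invr_gt0.
rewrite -hyx normrM Hx -mulrBl normrM Hx.
apply: (@le_lt_trans _ _ (dl * `|y| * x^-1)).
  rewrite ler_pM2r ?invr_gt0 //; apply: le_trans Hs.
  exact: ler_dist_dist.
rewrite -mulrA hyx /dl mulrAC ltr_pdivrMr // ltr_pM2l //.
Qed.
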